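(* Let $\mathcal{X}$ be finite with $|\mathcal{X}|\ge2$, $P$ a pmf on $\mathcal{X}$ with $P(x)>0$ for all $x$, and $L_{\rm th}>0$ satisfy $$H(P)+\log_2\big(1+1/\sqrt2\big)<L_{\rm th}.$$ Define $$\Delta^*(P)=\inf_{\ell\in\Lambda,\ \mathbb{E}[L]<L_{\rm th}}\ \sup_{z\ge0}\ \sup_{Q}\Big(\sum_{x}\tilde g_{z,Q,P}(x)\ell(x)-\frac{z^2}{2}L_{\rm th}\Big),$$ $Q$ ranging over pmfs on $\mathcal{X}$ and $L=\ell(X)$, $X\sim P$. Then $\Delta^*(P)=\inf_{\ell\in\Lambda,\ \mathbb{E}[L]<L_{\rm th}}\Big(\mathbb{E}[L]+\frac{\mathbb{E}[L^2]}{2(L_{\rm th}-\mathbb{E}[L])}\Big)$, and $$\Delta^*(P)=\max_{z\ge0}\max_{Q}\ \min_{\ell\in\Lambda,\ \mathbb{E}[L]<L_{\rm th}}\Big(\sum_x\tilde g_{z,Q,P}(x)\ell(x)-\frac{z^2}{2}L_{\rm th}\Big)=\max_{z\ge0}\max_{Q}\Big(\sum_{x}\tilde g_{z,Q,P}(x)\log_2\frac{\sum_{x'}\tilde g_{z,Q,P}(x')}{\tilde g_{z,Q,P}(x)}-\frac{z^2}{2}L_{\rm th}\Big).$$ Moreover, if $(z^*,Q^* )$ maximizes the last expression, then $\Delta^*(P)$ is attained uniquely by the lengths $\ell^*(x)=-\log_2P^*(x)$, where $P^*(x)=\tilde g_{z^*,Q^*,P}(x)/\sum_{x'}\tilde 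g_{z^*,Q^*,P}(x')$.
   Context: $\Lambda=\{\ell\in\mathbb{R}_+^{\mathcal{X}}:\sum_{x}2^{-\ell(x)}\le1\}$. $\tilde g_{z,Q,P}(x)=\big(1+\frac{z^2}{2}\big)P(x)+z\sqrt{Q(x)P(x)}$. $H(P)=-\sum_xP(x)\log_2P(x)$. Motivation: $\mathbb{E}[L]+\frac{\mathbb{E}[L^2]}{2(L_{\rm th}-\mathbb{E}[L])}$ is the average waiting time in an M/G/1 FCFS queue with arrival rate $1/L_{\rm th}$ and service times distributed as the codeword length $L$. *)

(* Defs.v *)
(* classical reals. Alphabet X = {0, ..., n-1}. *)
From Stdlib Require Import Reals Lra.
Open Scope R_scope.

Fixpoint rsum (n : nat) (f : nat -> R) : R :=
  match n with O => 0 | S k => rsum k f + f k end.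

Definition log2 (x : R) : R := ln x / ln 2.

Definition pmf (n : nat) (Q : nat -> R) : Prop :=
  (forall i, (i < n)%nat -> 0 <= Q i) /\ rsum n Q = 1.

Definition Lambda (n : nat) (l : nat -> R) : Prop :=
  (forall i, (i < n)%nat -> 0 <= l i) /\
  rsum n (fun i => Rpower 2 (- l i)) <= 1.

Definition entropy (n : nat) (P : nat -> R) : R :=
  - rsum n (fun i => P i * log2 (P i)).

Definition gt (z : R) (Q P : nat -> R) (i : nat) : R :=
  (1 + z ^ 2 / 2) * P i + z * sqrt (Q i * P i).

Definition EL (n : nat) (P l : nat -> R) : R := rsum n (fun i => P i * l i).
Definition EL2 (n : nat) (P l : nat -> R) : R := rsum n (fun i => P i * (l i) ^ 2).

Definition feasible (n : nat) (P : nat -> R) (Lth : R) (l : nat -> R) : Prop :=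
  Lambda n l /\ EL n P l < Lth.

Definition Jobj (n : nat) (P : nat -> R) (Lth z : R) (Q l : nat -> R) : R :=
  rsum n (fun i => gt z Q P i * l i) - z ^ 2 / 2 * Lth.

Definition Fobj (n : nat) (P : nat -> R) (Lth z : R) (Q : nat -> R) : R :=
  rsum n (fun i => gt z Q P i * log2 (rsum n (gt z Q P) / gt z Q P i))
  - z ^ 2 / 2 * Lth.

Definition IsSup (S : R -> Prop) (s : R) : Prop := is_lub S s.
Definition IsInf (S : R -> Prop) (m : R) : Prop :=
  (forall x, S x -> m <= x) /\ (forall b, (forall x, S x -> b <= x) -> b <= m).
Definition IsMax (S : R -> Prop) (m : R) : Prop := S m /\ (forall x, S x -> x <= m).

(* inner value: sup_{z>=0} sup_Q J(z,Q,l) (a joint sup equals the iterated sup) *)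
Definition innerSupSet (n : nat) (P : nat -> R) (Lth : R) (l : nat -> R) : R -> Prop :=
  fun v => exists z Q, 0 <= z /\ pmf n Q /\ v = Jobj n P Lth z Q l.

Definition DeltaStar (n : nat) (P : nat -> R) (Lth : R) (D : R) : Prop :=
  IsInf (fun v => exists l, feasible n P Lth l /\ IsSup (innerSupSet n P Lth l) v) D.

Definition queueObj (n : nat) (P : nat -> R) (Lth : R) (l : nat -> R) : R :=
  EL n P l + EL2 n P l / (2 * (Lth - EL n P l)).

(* Main.v *)
Require Import Defs.
From Stdlib Require Import Reals Lra Lia IndefiniteDescription.
From Coquelicot Require Import Coquelicot.
Open Scope R_scope.

Lemma rsum_ext n f g : (forall i, (i < n)%nat -> f i = g i) -> rsum n f = rsum n g.
Proof. induction n; simpl; intros H; auto. rewrite IHn by (intros; apply H; lia). rewrite H by lia; auto. Qed.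

Lemma rsum_le n f g : (forall i, (i < n)%nat -> f i <= g i) -> rsum n f <= rsum n g.
Proof. induction n; simpl; intros H; [lra|]. assert (f n <= g n) by (apply H; lia).
  assert (rsum n f <= rsum n g) by (apply IHn; intros; apply H; lia). lra. Qed.

Lemma rsum_lt n f g : (0 < n)%nat -> (forall i, (i < n)%nat -> f i < g i) -> rsum n f < rsum n g.
Proof. intros Hn H. destruct n; [lia|]. simpl.
  assert (f n < g n) by (apply H; lia).
  assert (rsum n f <= rsum n g) by (apply rsum_le; intros; left; apply H; lia). lra. Qed.

Lemma rsum_plus n f g : rsum n (fun i => f i + g i) = rsum n f + rsum n g.
Proof. induction n; simpl; [lra|]. rewrite IHn; lra. Qed.

Lemma rsum_minus n f g : rsum n (fun i => f i - g i) = rsum n f - rsum n g.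
Proof. induction n; simpl; [lra|]. rewrite IHn; lra. Qed.

Lemma rsum_scal n c f : rsum n (fun i => c * f i) = c * rsum n f.
Proof. induction n; simpl; [lra|]. rewrite IHn; lra. Qed.

Lemma rsum_const n c : rsum n (fun _ => c) = INR n * c.
Proof. induction n; simpl rsum; [simpl; lra|]. rewrite IHn, S_INR; lra. Qed.

Lemma rsum_nonneg n f : (forall i, (i < n)%nat -> 0 <= f i) -> 0 <= rsum n f.
Proof. intros H. replace 0 with (rsum n (fun _ => 0)). apply rsum_le; auto.
  rewrite rsum_const; lra. Qed.

Lemma rsum_term_le n f j : (forall i, (i < n)%nat -> 0 <= f i) -> (j < n)%nat -> f j <= rsum n f.
Proof. induction n; intros H Hj; [lia|]. simpl.
  destruct (Nat.eq_dec j n).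
  - subst. assert (0 <= rsum n f) by (apply rsum_nonneg; intros; apply H; lia). lra.
  - assert (f j <= rsum n f) by (apply IHn; [intros; apply H; lia| lia]).
    assert (0 <= f n) by (apply H; lia). lra. Qed.

Lemma rsum_zero_each n f : (forall i, (i < n)%nat -> 0 <= f i) -> rsum n f = 0 ->
  forall i, (i < n)%nat -> f i = 0.
Proof. intros H H0 i Hi. assert (f i <= rsum n f) by (apply rsum_term_le; auto).
  assert (0 <= f i) by auto. lra. Qed.

Lemma rsum_lim n (f : nat -> nat -> R) (g : nat -> R) :
  (forall i, (i < n)%nat -> is_lim_seq (fun k => f k i) (g i)) ->
  is_lim_seq (fun k => rsum n (f k)) (rsum n g).
Proof. induction n; intros H; simpl. apply is_lim_seq_const.
  apply is_lim_seq_plus'. apply IHn; intros; apply H; lia. apply H; lia. Qed.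

Lemma ln2_pos : 0 < ln 2.
Proof. rewrite <- ln_1. apply ln_increasing; lra. Qed.

Lemma Rpower2_pos x : 0 < Rpower 2 x.
Proof. unfold Rpower; apply exp_pos. Qed.

Lemma gibbs_term g S l : 0 < g -> 0 < S ->
  g - S * Rpower 2 (- l) <= ln 2 * (g * l - g * log2 (S / g)) /\
  (g - S * Rpower 2 (- l) = ln 2 * (g * l - g * log2 (S / g)) -> l = log2 (S / g)).
Proof.
  intros Hg HS. pose proof ln2_pos as H2.
  set (a := l * ln 2 - ln (S / g)).
  assert (E1 : ln 2 * (g * l - g * log2 (S / g)) = g * a).
  { unfold a, log2. field. lra. }
  assert (E2 : S * Rpower 2 (- l) = g * exp (- a)).
  { unfold a, Rpower. replace (- (l * ln 2 - ln (S / g))) with (- l * ln 2 + ln (S/g)) by ring.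
    rewrite exp_plus, exp_ln. field. lra. apply Rdiv_lt_0_compat; lra. }
  rewrite E1, E2. split.
  - pose proof (exp_ineq1_le (- a)). nra.
  - intros Heq. destruct (Req_dec a 0) as [Ha|Ha].
    + unfold a in Ha. unfold log2. apply (Rmult_eq_reg_r (ln 2)); [|lra].
      field_simplify; lra.
    + pose proof (exp_ineq1 (- a) ltac:(lra)). nra.
Qed.

Lemma gibbs_aux n g l : (0 < n)%nat -> (forall i, (i < n)%nat -> 0 < g i) -> Lambda n l ->
  let S := rsum n g in
  let d := fun i => ln 2 * (g i * l i - g i * log2 (S / g i)) - (g i - S * Rpower 2 (- l i)) in
  (forall i, (i < n)%nat -> 0 <= d i) /\ 0 < S /\
  ln 2 * (rsum n (fun i => g i * l i) - rsum n (fun i => g i * log2 (S / g i)))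
   = rsum n d + S * (1 - rsum n (fun i => Rpower 2 (- l i))).
Proof.
  intros Hn Hg [Hl0 Hk] S d.
  assert (HS : 0 < S).
  { unfold S. destruct n; [lia|]. simpl.
    assert (0 <= rsum n g) by (apply rsum_nonneg; intros; left; apply Hg; lia).
    assert (0 < g n) by (apply Hg; lia). lra. }
  split; [|split; auto].
  - intros i Hi. unfold d. destruct (gibbs_term (g i) S (l i) (Hg i Hi) HS). lra.
  - unfold d. rewrite rsum_minus, rsum_minus, rsum_scal, rsum_minus, rsum_scal.
    fold S. ring.
Qed.

Lemma gibbs n g l : (0 < n)%nat -> (forall i, (i < n)%nat -> 0 < g i) -> Lambda n l ->
  rsum n (fun i => g i * log2 (rsum n g / g i)) <= rsum n (fun i => g i * l i).
Proof.
  intros Hn Hg HL. destruct (gibbs_aux n g l Hn Hg HL) as [Hd [HS Heq]].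
  pose proof ln2_pos. destruct HL as [_ Hk].
  assert (0 <= rsum n (fun i => ln 2 * (g i * l i - g i * log2 (rsum n g / g i)) -
     (g i - rsum n g * Rpower 2 (- l i)))) by (apply rsum_nonneg; auto).
  assert (0 <= rsum n g * (1 - rsum n (fun i => Rpower 2 (- l i)))) by (apply Rmult_le_pos; lra).
  nra.
Qed.

Lemma gibbs_eq n g l : (0 < n)%nat -> (forall i, (i < n)%nat -> 0 < g i) -> Lambda n l ->
  rsum n (fun i => g i * l i) <= rsum n (fun i => g i * log2 (rsum n g / g i)) ->
  forall i, (i < n)%nat -> l i = log2 (rsum n g / g i).
Proof.
  intros Hn Hg HL Hle i Hi. pose proof (gibbs n g l Hn Hg HL) as Hge.
  destruct (gibbs_aux n g l Hn Hg HL) as [Hd [HS Heq]].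
  pose proof ln2_pos. destruct HL as [Hl0 Hk].
  set (D := rsum n (fun i => ln 2 * (g i * l i - g i * log2 (rsum n g / g i)) -
     (g i - rsum n g * Rpower 2 (- l i)))) in Heq.
  assert (0 <= D) by (apply rsum_nonneg; auto).
  assert (0 <= rsum n g * (1 - rsum n (fun i => Rpower 2 (- l i)))) by (apply Rmult_le_pos; lra).
  assert (D = 0) by nra.
  pose proof (rsum_zero_each n _ Hd H2 i Hi) as Hz. simpl in Hz.
  destruct (gibbs_term (g i) (rsum n g) (l i) (Hg i Hi) HS) as [_ Hu]. apply Hu. lra.
Qed.

Lemma lg_lambda n g : (0 < n)%nat -> (forall i, (i < n)%nat -> 0 < g i) ->
  Lambda n (fun i => log2 (rsum n g / g i)).
Proof.
  intros Hn Hg. pose proof ln2_pos.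
  assert (HS : forall i, (i < n)%nat -> g i <= rsum n g) by
    (intros; apply rsum_term_le; auto; intros; left; auto).
  split.
  - intros i Hi. unfold log2. apply Rdiv_le_0_compat; auto.
    rewrite <- ln_1. apply ln_le; [lra|]. pose proof (Hg i Hi). pose proof (HS i Hi).
    apply (Rmult_le_reg_r (g i)); auto. field_simplify; lra.
  - right. assert (0 < rsum n g) by (pose proof (Hg 0%nat Hn); pose proof (HS 0%nat Hn); lra).
    rewrite (rsum_ext n _ (fun i => / rsum n g * g i)).
    rewrite rsum_scal. field. lra.
    intros i Hi. unfold Rpower, log2. pose proof (Hg i Hi).
    replace (- (ln (rsum n g / g i) / ln 2) * ln 2) with (- ln (rsum n g / g i)) by (field; lra).
    rewrite <- ln_Rinv, exp_ln. field; lra.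
    apply Rinv_0_lt_compat, Rdiv_lt_0_compat; lra. apply Rdiv_lt_0_compat; lra.
Qed.

Lemma J_expand n P Lth z Q l : Jobj n P Lth z Q l =
  EL n P l + z * rsum n (fun i => sqrt (Q i * P i) * l i) - z ^ 2 / 2 * (Lth - EL n P l).
Proof.
  unfold Jobj, gt, EL.
  rewrite (rsum_ext n _ (fun i => (1 + z^2/2) * (P i * l i) + z * (sqrt (Q i * P i) * l i)))
    by (intros; ring).
  rewrite rsum_plus, !rsum_scal. ring.
Qed.

Lemma EL2_nonneg n P l : (forall i, (i < n)%nat -> 0 < P i) -> 0 <= EL2 n P l.
Proof. intros HP. unfold EL2. apply rsum_nonneg. intros i Hi. pose proof (HP i Hi).
  apply Rmult_le_pos; [lra| apply pow2_ge_0]. Qed.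

Lemma EL_nonneg n P l : (forall i, (i < n)%nat -> 0 < P i) -> Lambda n l -> 0 <= EL n P l.
Proof. intros HP [Hl _]. unfold EL. apply rsum_nonneg. intros i Hi. pose proof (HP i Hi).
  pose proof (Hl i Hi). nra. Qed.

Lemma amgm_term q p x u : 0 <= q -> 0 <= p -> 0 < u ->
  sqrt (q * p) * x <= (u * q + p * x ^ 2 / u) / 2.
Proof.
  intros Hq Hp Hu. rewrite sqrt_mult by auto.
  pose proof (sqrt_sqrt q Hq). pose proof (sqrt_sqrt p Hp).
  set (s := sqrt q) in *. set (t := sqrt p) in *.
  assert (0 <= (u * s - t * x) ^ 2 / u) by (apply Rdiv_le_0_compat; [apply pow2_ge_0| lra]).
  assert ((u * s - t * x) ^ 2 / u = u * q + p * x ^ 2 / u - 2 * (s * t * x)).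
  { rewrite <- H, <- H0. field. lra. }
  lra.
Qed.

Lemma J_le_queue n P Lth z Q l : (forall i, (i < n)%nat -> 0 < P i) -> pmf n Q -> 0 <= z ->
  EL n P l < Lth -> Jobj n P Lth z Q l <= queueObj n P Lth l.
Proof.
  intros HP [HQ0 HQ1] Hz Hb. rewrite J_expand. unfold queueObj.
  set (E := EL n P l) in *. set (b := Lth - E).
  assert (Hb' : 0 < b) by (unfold b; lra).
  pose proof (EL2_nonneg n P l HP) as HE2. set (E2 := EL2 n P l) in *.
  destruct (Req_dec z 0) as [Hz0|Hz0].
  - subst z. assert (0 <= E2 / (2 * b)) by (apply Rdiv_le_0_compat; lra). fold b. lra.
  - assert (Hzp : 0 < z) by lra. set (u := z * b).
    assert (Hu : 0 < u) by (unfold u; nra).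
    assert (W : rsum n (fun i => sqrt (Q i * P i) * l i) <= (u + E2 / u) / 2).
    { eapply Rle_trans. apply rsum_le with (g := fun i => (u * Q i + P i * l i ^ 2 / u) / 2).
      intros i Hi. apply amgm_term; auto. left; auto.
      rewrite (rsum_ext n _ (fun i => (u/2) * Q i + (/(2*u)) * (P i * l i ^ 2)))
        by (intros; field; lra).
      rewrite rsum_plus, !rsum_scal, HQ1. unfold E2, EL2. right. field. lra. }
    fold b.
    assert (z * rsum n (fun i => sqrt (Q i * P i) * l i) <= z * ((u + E2 / u) / 2))
      by (apply Rmult_le_compat_l; lra).
    assert (z * ((u + E2 / u) / 2) - z^2/2 * b = E2 / (2 * b)) by (unfold u; field; lra).
    lra.
Qed.

Definition zstar n P Lth l := sqrt (EL2 n P l) / (Lth - EL n P l).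
Definition Qstar n P l := fun i => P i * l i ^ 2 / EL2 n P l.

Lemma Qstar_pmf n P l : (forall i, (i < n)%nat -> 0 < P i) -> 0 < EL2 n P l -> pmf n (Qstar n P l).
Proof.
  intros HP H2. split.
  - intros i Hi. unfold Qstar. apply Rdiv_le_0_compat; auto. pose proof (HP i Hi).
    apply Rmult_le_pos; [lra|apply pow2_ge_0].
  - unfold Qstar. rewrite (rsum_ext n _ (fun i => / EL2 n P l * (P i * l i ^ 2))) by
      (intros; field; lra). rewrite rsum_scal. unfold EL2. field. fold (EL2 n P l). lra.
Qed.

Lemma sqrt_Qstar n P l i : 0 < P i -> 0 <= l i -> 0 < EL2 n P l ->
  sqrt (Qstar n P l i * P i) = P i * l i / sqrt (EL2 n P l).
Proof.
  intros HP Hl H2. unfold Qstar.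
  replace (P i * l i ^ 2 / EL2 n P l * P i) with ((P i * l i / sqrt (EL2 n P l)) * (P i * l i / sqrt (EL2 n P l))).
  apply sqrt_square. apply Rdiv_le_0_compat. nra. apply sqrt_lt_R0; auto.
  pose proof (sqrt_sqrt _ (Rlt_le _ _ H2)). pose proof (sqrt_lt_R0 _ H2).
  set (s := sqrt (EL2 n P l)) in *. rewrite <- H. field. lra.
Qed.

Lemma gt_star n P Lth l i : 0 < P i -> 0 <= l i -> 0 < EL2 n P l -> EL n P l < Lth ->
  gt (zstar n P Lth l) (Qstar n P l) P i =
  P i * (1 + EL2 n P l / (2 * (Lth - EL n P l) ^ 2)) + P i * l i / (Lth - EL n P l).
Proof.
  intros HP Hl H2 Hb. unfold gt. rewrite sqrt_Qstar by auto. unfold zstar.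
  pose proof (sqrt_sqrt _ (Rlt_le _ _ H2)). pose proof (sqrt_lt_R0 _ H2).
  replace ((sqrt (EL2 n P l) / (Lth - EL n P l)) ^ 2) with
    (sqrt (EL2 n P l) * sqrt (EL2 n P l) / (Lth - EL n P l) ^ 2) by (field; lra).
  rewrite H. field. split; lra.
Qed.

Lemma J_attain n P Lth l : (forall i, (i < n)%nat -> 0 < P i) -> Lambda n l ->
  0 < EL2 n P l -> EL n P l < Lth ->
  Jobj n P Lth (zstar n P Lth l) (Qstar n P l) l = queueObj n P Lth l.
Proof.
  intros HP [Hl _] H2 Hb. rewrite J_expand.
  rewrite (rsum_ext n _ (fun i => / sqrt (EL2 n P l) * (P i * l i ^ 2))).
  2: { intros i Hi. rewrite sqrt_Qstar by auto. pose proof (sqrt_lt_R0 _ H2). field. lra. }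
  rewrite rsum_scal. fold (EL2 n P l). unfold queueObj, zstar.
  pose proof (sqrt_sqrt _ (Rlt_le _ _ H2)). pose proof (sqrt_lt_R0 _ H2).
  replace ((sqrt (EL2 n P l) / (Lth - EL n P l)) ^ 2) with
    (sqrt (EL2 n P l) * sqrt (EL2 n P l) / (Lth - EL n P l) ^ 2) by (field; lra).
  rewrite H. field. split; lra.
Qed.

Fixpoint pmin (n : nat) (P : nat -> R) : R :=
  match n with O => 1 | S k => Rmin (pmin k P) (P k) end.

Lemma pmin_le n P i : (i < n)%nat -> pmin n P <= P i.
Proof. induction n; intros Hi; [lia|]. simpl. destruct (Nat.eq_dec i n).
  subst; apply Rmin_r. eapply Rle_trans; [apply Rmin_l| apply IHn; lia]. Qed.

Lemma pmin_pos n P : (forall i, (i < n)%nat -> 0 < P i) -> 0 < pmin n P.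
Proof. induction n; intros H; simpl; [lra|]. apply Rmin_glb_lt. apply IHn; intros; apply H; lia.
  apply H; lia. Qed.

Lemma lambda_big n l : (2 <= n)%nat -> Lambda n l -> exists j, (j < n)%nat /\ 1 <= l j.
Proof.
  intros Hn [Hl Hk]. destruct (Classical_Prop.classic (exists j, (j < n)%nat /\ 1 <= l j)); auto.
  exfalso.
  assert (rsum n (fun _ => / 2) < rsum n (fun i => Rpower 2 (- l i))).
  { apply rsum_lt; [lia|]. intros i Hi.
    assert (l i < 1) by (apply Rnot_le_lt; intro; apply H; eauto).
    replace (/2) with (Rpower 2 (Ropp 1)). apply Rpower_lt; lra.
    rewrite Rpower_Ropp, Rpower_1; lra. }
  rewrite rsum_const in H0. apply le_INR in Hn. simpl in Hn. lra.
Qed.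

Lemma EL2_lower n P l : (2 <= n)%nat -> (forall i, (i < n)%nat -> 0 < P i) -> Lambda n l ->
  pmin n P <= EL2 n P l.
Proof.
  intros Hn HP HL. destruct (lambda_big n l Hn HL) as [j [Hj H1]].
  apply Rle_trans with (P j). apply pmin_le; auto.
  apply Rle_trans with (P j * l j ^ 2). pose proof (HP j Hj). assert (1 <= l j ^ 2) by nra. nra.
  unfold EL2. apply (rsum_term_le n (fun i => P i * l i ^ 2)); auto.
  intros i Hi. pose proof (HP i Hi). apply Rmult_le_pos; [lra|apply pow2_ge_0].
Qed.

Lemma inner_lub n P Lth l : (2 <= n)%nat -> (forall i, (i < n)%nat -> 0 < P i) ->
  feasible n P Lth l -> IsSup (innerSupSet n P Lth l) (queueObj n P Lth l).
Proof.
  intros Hn HP [HL Hb].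
  assert (H2 : 0 < EL2 n P l) by (eapply Rlt_le_trans; [apply pmin_pos; eauto| apply EL2_lower; auto]).
  split.
  - intros v [z [Q [Hz [HQ ->]]]]. apply J_le_queue; auto.
  - intros b Hub. apply Hub. exists (zstar n P Lth l), (Qstar n P l). split; [|split].
    + unfold zstar. apply Rdiv_le_0_compat. apply sqrt_pos. lra.
    + apply Qstar_pmf; auto.
    + symmetry; apply J_attain; auto.
Qed.

Lemma var_alg E E2 e f h b G : 0 < b -> G = e + (2*f*b+E2*e)/(2*b^2) -> G < 0 ->
  exists t, 0 < t <= 1 /\ t * e < b / 2 /\
  (E + t*e) + (E2 + 2*t*f + t^2*h)/(2*(b - t*e)) < E + E2/(2*b).
Proof.
  intros Hb HG HGn.
  set (K := (2*f*b + E2*e)*e/(2*b^2) + h/2).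
  set (t := Rmin 1 (Rmin (b/(2*(Rabs e+1))) (-G*b/(4*(Rabs K+1))))).
  pose proof (Rabs_pos e). pose proof (Rabs_pos K).
  assert (Ht1 : t <= 1) by apply Rmin_l.
  assert (Ht2 : t <= b/(2*(Rabs e+1))) by (eapply Rle_trans; [apply Rmin_r| apply Rmin_l]).
  assert (Ht3 : t <= -G*b/(4*(Rabs K+1))) by (eapply Rle_trans; [apply Rmin_r| apply Rmin_r]).
  assert (Ht0 : 0 < t).
  { unfold t. apply Rmin_glb_lt; [lra|]. apply Rmin_glb_lt; apply Rdiv_lt_0_compat; nra. }
  assert (Hte : t * Rabs e < b / 2).
  { apply Rle_lt_trans with (b/(2*(Rabs e+1)) * Rabs e). apply Rmult_le_compat_r; lra.
    apply (Rmult_lt_reg_r (2*(Rabs e + 1))). lra. field_simplify; nra. }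
  assert (Hte' : t * e < b / 2).
  { pose proof (Rle_abs e). nra. }
  assert (Hte'' : - (t * e) < b / 2).
  { pose proof (Rle_abs (-e)). rewrite Rabs_Ropp in H1. nra. }
  set (bt := b - t * e).
  assert (Hbt : b / 2 < bt) by (unfold bt; lra).
  exists t. split; [lra|split; [lra|]].
  assert (Hid : (E + t*e) + (E2 + 2*t*f + t^2*h)/(2*bt) - (E + E2/(2*b)) = t * (G + t*K/bt)).
  { rewrite HG. unfold K, bt. field. split; [|lra]. fold bt. lra. }
  assert (HK : t * K / bt <= 2 * t * Rabs K / b).
  { apply Rle_trans with (t * Rabs K / bt).
    unfold Rdiv. apply Rmult_le_compat_r. left; apply Rinv_0_lt_compat; lra.
    apply Rmult_le_compat_l; [lra| apply Rle_abs].
    unfold Rdiv. replace (2 * t * Rabs K * / b) with (t * Rabs K * / (b/2)) by (field; lra).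
    apply Rmult_le_compat_l. nra. apply Rinv_le_contravar; lra. }
  assert (HK2 : 2 * t * Rabs K / b <= - G / 2 * (Rabs K / (Rabs K + 1))).
  { apply Rle_trans with (2 * (-G*b/(4*(Rabs K+1))) * Rabs K / b).
    unfold Rdiv. apply Rmult_le_compat_r. left; apply Rinv_0_lt_compat; lra.
    apply Rmult_le_compat_r; lra. right. field. lra. }
  assert (HK3 : Rabs K / (Rabs K + 1) < 1).
  { apply (Rmult_lt_reg_r (Rabs K + 1)); [lra|]. field_simplify; lra. }
  assert (G + t * K / bt < 0) by nra.
  assert (0 < t * (-(G + t*K/bt))) by (apply Rmult_lt_0_compat; lra).
  change (b - t*e) with bt. lra.
Qed.

Lemma exp_tangent u m : exp m * (1 + (u - m)) <= exp u.
Proof. replace (exp u) with (exp m * exp (u - m)) by (rewrite <- exp_plus; f_equal; ring).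
  apply Rmult_le_compat_l; [left; apply exp_pos| apply exp_ineq1_le]. Qed.

Lemma rp_convex x y t : 0 <= t <= 1 ->
  Rpower 2 (- (x + t * (y - x))) <= (1 - t) * Rpower 2 (- x) + t * Rpower 2 (- y).
Proof.
  intros Ht. unfold Rpower. set (m := - (x + t * (y - x)) * ln 2).
  pose proof (exp_tangent (- x * ln 2) m). pose proof (exp_tangent (- y * ln 2) m).
  assert ((1 - t) * (exp m * (1 + (- x * ln 2 - m))) + t * (exp m * (1 + (- y * ln 2 - m))) = exp m)
    by (unfold m; ring).
  nra.
Qed.

Definition gs n P Lth l := gt (zstar n P Lth l) (Qstar n P l) P.

Lemma variational n P Lth ls : (2 <= n)%nat -> (forall i, (i < n)%nat -> 0 < P i) ->
  feasible n P Lth ls -> (forall l, feasible n P Lth l -> queueObj n P Lth ls <= queueObj n P Lth l) ->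
  forall l', Lambda n l' ->
  rsum n (fun i => gs n P Lth ls i * ls i) <= rsum n (fun i => gs n P Lth ls i * l' i).
Proof.
  intros Hn HP [HL Hb] Hmin l' HL'.
  assert (H2 : 0 < EL2 n P ls) by (eapply Rlt_le_trans; [apply pmin_pos; eauto| apply EL2_lower; auto]).
  apply Rnot_lt_le. intros Hlt.
  set (E := EL n P ls) in *. set (E2 := EL2 n P ls) in *. set (b := Lth - E).
  assert (Hb' : 0 < b) by (unfold b; lra).
  set (e := rsum n (fun i => P i * (l' i - ls i))).
  set (f := rsum n (fun i => P i * ls i * (l' i - ls i))).
  set (h := rsum n (fun i => P i * (l' i - ls i) ^ 2)).
  set (G := e + (2*f*b+E2*e)/(2*b^2)).
  assert (HG : rsum n (fun i => gs n P Lth ls i * l' i) - rsum n (fun i => gs n P Lth ls i * ls i) = G).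
  { rewrite <- rsum_minus.
    rewrite (rsum_ext n _ (fun i => (1 + E2 / (2 * b ^ 2)) * (P i * (l' i - ls i)) + / b * (P i * ls i * (l' i - ls i)))).
    rewrite rsum_plus, !rsum_scal. fold e f. unfold G. field. lra.
    intros i Hi. unfold gs. rewrite (gt_star n P Lth ls i (HP i Hi) (proj1 HL i Hi) H2 Hb).
    fold E E2 b. field. lra. }
  destruct (var_alg E E2 e f h b G Hb' eq_refl ltac:(lra)) as [t [Ht [Hte Hq]]].
  set (lt := fun i => ls i + t * (l' i - ls i)).
  assert (HELt : EL n P lt = E + t * e).
  { unfold EL, lt, e, E, EL. rewrite <- rsum_scal, <- rsum_plus. apply rsum_ext; intros; ring. }
  assert (HEL2t : EL2 n P lt = E2 + 2 * t * f + t^2 * h).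
  { unfold EL2, lt, f, h, E2, EL2.
    rewrite (rsum_ext n (fun i => P i * (ls i + t * (l' i - ls i)) ^ 2)
      (fun i => (P i * ls i ^ 2 + (2 * t) * (P i * ls i * (l' i - ls i))) + t^2 * (P i * (l' i - ls i)^2)))
      by (intros; ring).
    rewrite !rsum_plus, !rsum_scal. ring. }
  assert (Hfeas : feasible n P Lth lt).
  { split; [split|].
    - intros i Hi. unfold lt. pose proof (proj1 HL i Hi). pose proof (proj1 HL' i Hi). nra.
    - eapply Rle_trans. apply rsum_le with (g := fun i => (1 - t) * Rpower 2 (- ls i) + t * Rpower 2 (- l' i)).
      intros i Hi. unfold lt. apply rp_convex; lra.
      rewrite rsum_plus, !rsum_scal. destruct HL as [_ K1]. destruct HL' as [_ K2]. nra.
    - rewrite HELt. unfold b in Hte. lra. }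
  pose proof (Hmin lt Hfeas) as Hm. unfold queueObj in Hm. rewrite HELt, HEL2t in Hm.
  fold E E2 in Hm. replace (Lth - (E + t * e)) with (b - t * e) in Hm by (unfold b; ring).
  fold b in Hm. lra.
Qed.

Lemma lim_inv_S : is_lim_seq (fun k => / INR (S k)) 0.
Proof.
  assert (H : is_lim_seq (fun k => INR (S k)) p_infty).
  { apply (is_lim_seq_incr_1 INR). apply is_lim_seq_INR. }
  pose proof (is_lim_seq_inv _ _ H) as H'. simpl in H'. apply H'. discriminate.
Qed.

Lemma valadh_subseq u x : ValAdh u x ->
  exists phi : nat -> nat, (forall k, (phi k < phi (S k))%nat) /\ is_lim_seq (fun k => u (phi k)) x.
Proof.
  intros H.
  assert (Hs : forall p : nat * nat, exists q, (fst p <= q)%nat /\ Rabs (u q - x) < / INR (S (snd p))).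
  { intros [N k]. simpl.
    assert (Hpos : 0 < / INR (S k)) by (apply Rinv_0_lt_compat, lt_0_INR; lia).
    destruct (H (fun y => Rabs (y - x) < / INR (S k)) N) as [p [Hp Hv]].
    - exists (mkposreal _ Hpos). intros y Hy. unfold disc in Hy. simpl in Hy. auto.
    - exists p; auto. }
  destruct (functional_choice _ Hs) as [sel Hsel].
  set (phi := fix phi k := match k with O => sel (0%nat, 0%nat) | S k' => sel (S (phi k'), S k') end).
  exists phi. split.
  - intros k. simpl. destruct (Hsel (S (phi k), S k)) as [H1 _]. simpl in H1. lia.
  - apply is_lim_seq_le_le with (u := fun k => x - / INR (S k)) (w := fun k => x + / INR (S k)).
    + intros k. assert (Rabs (u (phi k) - x) < / INR (S k)).
      { destruct k; simpl phi; [apply (Hsel (0%nat,0%nat))| apply (Hsel (S (phi k), S k))]. }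
      apply Rabs_def2 in H0. lra.
    + replace (Finite x) with (Finite (x - 0)) by (f_equal; ring).
      apply is_lim_seq_minus'. apply is_lim_seq_const. apply lim_inv_S.
    + replace (Finite x) with (Finite (x + 0)) by (f_equal; ring).
      apply is_lim_seq_plus'. apply is_lim_seq_const. apply lim_inv_S.
Qed.

Lemma strict_mono (phi : nat -> nat) : (forall k, (phi k < phi (S k))%nat) ->
  forall a b, (a < b)%nat -> (phi a < phi b)%nat.
Proof. intros H a b Hab. induction b; [lia|]. destruct (Nat.eq_dec a b).
  subst; auto. specialize (IHb ltac:(lia)). specialize (H b). lia. Qed.

Lemma extract n (M : nat -> R) (u : nat -> nat -> R) :
  (forall k i, (i < n)%nat -> 0 <= u k i <= M i) ->
  exists (phi : nat -> nat) (v : nat -> R), (forall k, (phi k < phi (S k))%nat) /\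
    forall i, (i < n)%nat -> is_lim_seq (fun k => u (phi k) i) (v i).
Proof.
  induction n; intros Hb.
  - exists (fun k => k), (fun _ => 0). split; [intros; lia| intros; lia].
  - destruct IHn as [phi [v [Hphi Hv]]]. intros k i Hi; apply Hb; lia.
    destruct (Bolzano_Weierstrass (fun k => u (phi k) n) (fun c => 0 <= c <= M n)) as [x Hx].
    apply compact_P3. intros k; apply Hb; lia.
    destruct (valadh_subseq _ _ Hx) as [psi [Hpsi Hlim]].
    exists (fun k => phi (psi k)), (fun i => if Nat.eq_dec i n then x else v i). split.
    + intros k. apply strict_mono; auto.
    + intros i Hi. destruct (Nat.eq_dec i n).
      * subst; auto.
      * apply (is_lim_seq_subseq (fun k => u (phi k) i) (v i) psi).
        apply eventually_subseq; auto. apply Hv; lia.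
Qed.

Lemma rp_cont x : continuity_pt (fun y => Rpower 2 (- y)) x.
Proof.
  unfold Rpower. change (continuity_pt (comp exp (fun y => - y * ln 2)) x).
  apply continuity_pt_comp.
  - apply continuity_pt_mult. apply continuity_pt_opp. apply derivable_continuous_pt, derivable_pt_id.
    apply continuity_pt_const. intros a b; auto.
  - apply derivable_continuous_pt, derivable_pt_exp.
Qed.

Lemma queue_nonneg n P Lth l : (forall i, (i < n)%nat -> 0 < P i) -> feasible n P Lth l ->
  0 <= queueObj n P Lth l.
Proof. intros HP [HL Hb]. unfold queueObj. pose proof (EL_nonneg n P l HP HL).
  pose proof (EL2_nonneg n P l HP). assert (0 <= EL2 n P l / (2 * (Lth - EL n P l)))
  by (apply Rdiv_le_0_compat; lra). lra. Qed.

Lemma inf_exists (S : R -> Prop) : (exists x, S x) -> (forall x, S x -> 0 <= x) ->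
  exists m, IsInf S m.
Proof.
  intros [x Hx] H0.
  destruct (completeness (fun y => S (- y))) as [M [Hub Hl]].
  - exists 0. intros y Hy. apply H0 in Hy. lra.
  - exists (- x). rewrite Ropp_involutive; auto.
  - exists (- M). split.
    + intros y Hy. assert (- y <= M) by (apply Hub; rewrite Ropp_involutive; auto). lra.
    + intros b Hb. assert (M <= - b). { apply Hl. intros y Hy. apply Hb in Hy. lra. } lra.
Qed.

Lemma exists_min n P Lth : (2 <= n)%nat -> (forall i, (i < n)%nat -> 0 < P i) ->
  (exists l, feasible n P Lth l) ->
  exists ls, feasible n P Lth ls /\ forall l, feasible n P Lth l -> queueObj n P Lth ls <= queueObj n P Lth l.
Proof.
  intros Hn HP [l0 Hl0].
  destruct (inf_exists (fun v => exists l, feasible n P Lth l /\ v = queueObj n P Lth l)) as [m [Hlb Hglb]].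
  { exists (queueObj n P Lth l0); eauto. }
  { intros x [l [Hf ->]]. apply queue_nonneg; auto. }
  assert (Hm0 : 0 <= m).
  { apply Hglb. intros x [l [Hf ->]]. apply queue_nonneg; auto. }
  assert (Hseq : forall k, exists l, feasible n P Lth l /\ queueObj n P Lth l < m + / INR (S k)).
  { intros k. apply Classical_Prop.NNPP. intros Hno.
    assert (Hpos : 0 < / INR (S k)) by (apply Rinv_0_lt_compat, lt_0_INR; lia).
    assert (m + / INR (S k) <= m).
    { apply Hglb. intros x [l [Hf ->]]. apply Rnot_lt_le. intro. apply Hno; eauto. }
    lra. }
  destruct (functional_choice _ Hseq) as [u Hu].
  assert (Hbd : forall k i, (i < n)%nat -> 0 <= u k i <= Lth / P i).
  { intros k i Hi. destruct (Hu k) as [[[Hl _] Hb] _]. split; auto.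
    pose proof (HP i Hi). apply (Rmult_le_reg_l (P i)); auto.
    replace (P i * (Lth / P i)) with Lth by (field; lra).
    assert (P i * u k i <= EL n P (u k)).
    { apply (rsum_term_le n (fun j => P j * u k j)); auto.
      intros j Hj. pose proof (HP j Hj). pose proof (Hl j Hj). nra. }
    lra. }
  destruct (extract n (fun i => Lth / P i) u Hbd) as [phi [v [Hphi Hv]]].
  set (w := fun k => u (phi k)).
  assert (LE : is_lim_seq (fun k => EL n P (w k)) (EL n P v)).
  { apply rsum_lim. intros i Hi. apply is_lim_seq_mult'. apply is_lim_seq_const. apply Hv; auto. }
  assert (LE2 : is_lim_seq (fun k => EL2 n P (w k)) (EL2 n P v)).
  { apply rsum_lim. intros i Hi. apply is_lim_seq_mult'. apply is_lim_seq_const.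
    simpl. apply is_lim_seq_mult'. apply Hv; auto. apply is_lim_seq_mult'. apply Hv; auto.
    apply is_lim_seq_const. }
  assert (LK : is_lim_seq (fun k => rsum n (fun i => Rpower 2 (- w k i))) (rsum n (fun i => Rpower 2 (- v i)))).
  { apply rsum_lim. intros i Hi. apply (is_lim_seq_continuous (fun y => Rpower 2 (- y))).
    apply rp_cont. apply Hv; auto. }
  set (c := pmin n P). assert (Hc : 0 < c) by (apply pmin_pos; auto).
  assert (Hbk : forall k, c / (2 * (m + 1)) <= Lth - EL n P (w k)).
  { intros k. destruct (Hu (phi k)) as [[HL Hb] Hq]. fold (w k) in HL, Hb, Hq.
    pose proof (EL_nonneg n P (w k) HP HL). pose proof (EL2_lower n P (w k) Hn HP HL).
    fold c in H0. unfold queueObj in Hq.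
    assert (/ INR (S (phi k)) <= 1).
    { rewrite <- Rinv_1. apply Rinv_le_contravar; [lra|]. rewrite S_INR. pose proof (pos_INR (phi k)). lra. }
    set (b := Lth - EL n P (w k)) in *.
    assert (Hb' : 0 < b) by (unfold b; lra).
    assert (EL2 n P (w k) / (2 * b) <= m + 1) by lra.
    apply Rle_trans with (EL2 n P (w k) / (2 * (m + 1))).
    unfold Rdiv. apply Rmult_le_compat_r; [|lra]. left; apply Rinv_0_lt_compat; lra.
    apply (Rmult_le_reg_r (2 * (m+1))); [lra|].
    apply (Rmult_le_reg_r (/ (2 * b))); [apply Rinv_0_lt_compat; lra|].
    replace (EL2 n P (w k) / (2 * (m + 1)) * (2 * (m + 1)) * / (2 * b)) with (EL2 n P (w k) / (2 * b))
      by (field; lra).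
    replace (b * (2 * (m + 1)) * / (2 * b)) with (m + 1) by (field; lra). auto. }
  assert (Hbv : c / (2 * (m + 1)) <= Lth - EL n P v).
  { assert (HL' : is_lim_seq (fun k => Lth - EL n P (w k)) (Lth - EL n P v))
      by (apply is_lim_seq_minus'; [apply is_lim_seq_const| auto]).
    pose proof (is_lim_seq_le _ _ _ _ Hbk (is_lim_seq_const _) HL'). simpl in H. auto. }
  assert (Hcp : 0 < c / (2 * (m + 1))) by (apply Rdiv_lt_0_compat; lra).
  assert (Hfv : feasible n P Lth v).
  { split; [split|].
    - intros i Hi. assert (forall k, 0 <= w k i) by (intros; apply (Hbd (phi k) i Hi)).
      pose proof (is_lim_seq_le _ _ _ _ H (is_lim_seq_const 0) (Hv i Hi)). simpl in H0. auto.
    - assert (forall k, rsum n (fun i => Rpower 2 (- w k i)) <= 1).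
      { intros k. destruct (Hu (phi k)) as [[[_ HK] _] _]. auto. }
      pose proof (is_lim_seq_le _ _ _ _ H LK (is_lim_seq_const 1)). simpl in H0. auto.
    - lra. }
  assert (LQ : is_lim_seq (fun k => queueObj n P Lth (w k)) (queueObj n P Lth v)).
  { unfold queueObj. apply is_lim_seq_plus'; auto. unfold Rdiv. apply is_lim_seq_mult'; auto.
    assert (H2 : is_lim_seq (fun k => 2 * (Lth - EL n P (w k))) (2 * (Lth - EL n P v))).
    { apply is_lim_seq_mult'. apply is_lim_seq_const. apply is_lim_seq_minus'; auto. apply is_lim_seq_const. }
    pose proof (is_lim_seq_inv _ _ H2) as H3. simpl in H3. apply H3.
    intro Heq. injection Heq. lra. }
  assert (Lm : is_lim_seq (fun k => m + / INR (S (phi k))) m).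
  { replace (Finite m) with (Finite (m + 0)) by (f_equal; ring).
    apply is_lim_seq_plus'. apply is_lim_seq_const.
    apply (is_lim_seq_subseq (fun k => / INR (S k)) 0 phi). apply eventually_subseq; auto.
    apply lim_inv_S. }
  assert (Hle : queueObj n P Lth v <= m).
  { assert (forall k, queueObj n P Lth (w k) <= m + / INR (S (phi k))).
    { intros k. destruct (Hu (phi k)) as [_ Hq]. left; auto. }
    pose proof (is_lim_seq_le _ _ _ _ H LQ Lm). simpl in H0. auto. }
  exists v. split; auto. intros l Hl. apply Rle_trans with m; auto. apply Hlb. eauto.
Qed.

Lemma gt_pos z Q P i : 0 < P i -> 0 <= z -> 0 < gt z Q P i.
Proof. intros HP Hz. unfold gt. pose proof (sqrt_pos (Q i * P i)).
  assert (0 <= z^2) by apply pow2_ge_0. nra. Qed.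

Lemma fobj_le_J n P Lth z Q l : (0 < n)%nat -> (forall i, (i < n)%nat -> 0 < P i) -> 0 <= z ->
  Lambda n l -> Fobj n P Lth z Q <= Jobj n P Lth z Q l.
Proof. intros Hn HP Hz HL. unfold Fobj, Jobj.
  pose proof (gibbs n (gt z Q P) l Hn (fun i Hi => gt_pos z Q P i (HP i Hi) Hz) HL). lra. Qed.

Lemma neg_log2_inv a b : 0 < a -> 0 < b -> - log2 (a / b) = log2 (b / a).
Proof. intros Ha Hb. unfold log2. replace (b / a) with (/ (a / b)) by (field; lra).
  rewrite ln_Rinv by (apply Rdiv_lt_0_compat; lra). unfold Rdiv at 1 3. ring. Qed.

Lemma feasible_ext n P Lth l l' : (forall i, (i < n)%nat -> l i = l' i) ->
  feasible n P Lth l -> feasible n P Lth l'.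
Proof. intros He [[H0 HK] Hb]. split; [split|].
  - intros i Hi; rewrite <- He; auto.
  - erewrite rsum_ext; [apply HK|]. intros i Hi; simpl; rewrite He; auto.
  - unfold EL in *. erewrite rsum_ext; [apply Hb|]. intros i Hi; simpl; rewrite He; auto. Qed.

Lemma queue_ext n P Lth l l' : (forall i, (i < n)%nat -> l i = l' i) ->
  queueObj n P Lth l = queueObj n P Lth l'.
Proof. intros He. unfold queueObj, EL, EL2.
  rewrite (rsum_ext n (fun i => P i * l i) (fun i => P i * l' i)) by (intros; rewrite He; auto).
  rewrite (rsum_ext n (fun i => P i * l i ^ 2) (fun i => P i * l' i ^ 2)) by (intros; rewrite He; auto).
  auto. Qed.

Theorem theorem4 (n : nat) (P : nat -> R) (Lth : R) :
  (2 <= n)%nat ->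
  pmf n P ->
  (forall i, (i < n)%nat -> 0 < P i) ->
  0 < Lth ->
  entropy n P + log2 (1 + 1 / sqrt 2) < Lth ->
  exists D : R,
    DeltaStar n P Lth D /\
    IsInf (fun v => exists l, feasible n P Lth l /\ v = queueObj n P Lth l) D /\
    IsMax (fun v => exists z Q, 0 <= z /\ pmf n Q /\
             IsInf (fun w => exists l, feasible n P Lth l /\ w = Jobj n P Lth z Q l) v) D /\
    IsMax (fun v => exists z Q, 0 <= z /\ pmf n Q /\ v = Fobj n P Lth z Q) D /\
    (forall zs Qs, 0 <= zs -> pmf n Qs ->
       (forall z Q, 0 <= z -> pmf n Q -> Fobj n P Lth z Q <= Fobj n P Lth zs Qs) ->
       let ls := fun i => - log2 (gt zs Qs P i / rsum n (gt zs Qs P)) in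
       feasible n P Lth ls /\
       IsSup (innerSupSet n P Lth ls) D /\
       (forall l, feasible n P Lth l -> IsSup (innerSupSet n P Lth l) D ->
          forall i, (i < n)%nat -> l i = ls i)).
Proof.
  intros Hn [HP0 HP1] HP HLth Hent.
  assert (Hn0 : (0 < n)%nat) by lia.
  assert (Hfe : exists l, feasible n P Lth l).
  { exists (fun i => log2 (rsum n P / P i)). split. apply lg_lambda; auto.
    assert (0 < log2 (1 + 1 / sqrt 2)).
    { unfold log2. apply Rdiv_lt_0_compat; [|apply ln2_pos]. rewrite <- ln_1.
      apply ln_increasing; [lra|]. pose proof Rlt_sqrt2_0.
      assert (0 < 1 / sqrt 2) by (apply Rdiv_lt_0_compat; lra). lra. }
    replace (EL n P (fun i => log2 (rsum n P / P i))) with (entropy n P). lra.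
    unfold EL, entropy. rewrite HP1. rewrite <- (Rmult_1_l (rsum n _)) at 1.
    replace (- (1 * rsum n (fun i : nat => P i * log2 (P i)))) with
      (-1 * rsum n (fun i : nat => P i * log2 (P i))) by ring.
    rewrite <- rsum_scal. apply rsum_ext. intros i Hi.
    pose proof (HP i Hi). unfold log2. replace (1 / P i) with (/ P i) by (field; lra).
    rewrite ln_Rinv by auto. unfold Rdiv. ring. }
  destruct (exists_min n P Lth Hn HP Hfe) as [lo [Hlo Hmin]].
  set (D := queueObj n P Lth lo).
  assert (H2 : 0 < EL2 n P lo) by
    (eapply Rlt_le_trans; [apply pmin_pos; eauto| apply EL2_lower; auto; apply Hlo]).
  set (zo := zstar n P Lth lo). set (Qo := Qstar n P lo).
  assert (Hzo : 0 <= zo) by (unfold zo, zstar; apply Rdiv_le_0_compat; [apply sqrt_pos| destruct Hlo; lra]).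
  assert (HQo : pmf n Qo) by (apply Qstar_pmf; auto).
  assert (HJo : Jobj n P Lth zo Qo lo = D) by (apply J_attain; auto; apply Hlo).
  assert (Hwd : forall z Q, 0 <= z -> pmf n Q -> Fobj n P Lth z Q <= D).
  { intros z Q Hz HQ. eapply Rle_trans. apply fobj_le_J with (l := lo); auto. apply Hlo.
    apply J_le_queue; auto. apply Hlo. }
  assert (HFo : Fobj n P Lth zo Qo = D).
  { apply Rle_antisym. apply Hwd; auto.
    rewrite <- HJo. unfold Jobj, Fobj.
    assert (rsum n (fun i => gt zo Qo P i * lo i) <=
            rsum n (fun i => gt zo Qo P i * log2 (rsum n (gt zo Qo P) / gt zo Qo P i))); [|lra].
    apply (variational n P Lth lo Hn HP Hlo Hmin).
    apply lg_lambda; auto. intros i Hi. apply gt_pos; auto. }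
  assert (Hqsup : forall l v, feasible n P Lth l -> IsSup (innerSupSet n P Lth l) v -> v = queueObj n P Lth l).
  { intros l v Hl Hv. apply (is_lub_u _ _ _ Hv). apply inner_lub; auto. }
  assert (Hinf2 : IsInf (fun v => exists l, feasible n P Lth l /\ v = queueObj n P Lth l) D).
  { split. intros x [l [Hl ->]]. apply Hmin; auto. intros b Hb. apply Hb. exists lo; auto. }
  assert (Huniq : forall zs Qs, 0 <= zs -> Fobj n P Lth zs Qs = D -> pmf n Qs ->
           forall l, feasible n P Lth l -> queueObj n P Lth l = D ->
           forall i, (i < n)%nat -> l i = - log2 (gt zs Qs P i / rsum n (gt zs Qs P))).
  { intros zs Qs Hzs HF HQs l Hl Hq i Hi.
    assert (Jobj n P Lth zs Qs l <= Fobj n P Lth zs Qs).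
    { rewrite HF, <- Hq. apply J_le_queue; auto. apply Hl. }
    unfold Jobj, Fobj in H.
    rewrite neg_log2_inv. apply (gibbs_eq n (gt zs Qs P) l Hn0).
    intros j Hj; apply gt_pos; auto. apply Hl. lra. auto.
    apply gt_pos; auto. apply Rlt_le_trans with (gt zs Qs P i). apply gt_pos; auto.
    apply rsum_term_le; auto. intros j Hj; left; apply gt_pos; auto. }
  exists D. split; [|split; [auto|split; [|split]]].
  -
    split.
    + intros x [l [Hl Hs]]. rewrite (Hqsup l x Hl Hs). apply Hmin; auto.
    + intros b Hb. apply Hb. exists lo. split; auto. apply inner_lub; auto.
  - split.
    + exists zo, Qo. split; [auto|split; [auto|]]. split.
      * intros x [l [Hl ->]]. rewrite <- HFo. apply fobj_le_J; auto. apply Hl.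
      * intros b Hb. rewrite <- HJo. apply Hb. exists lo; auto.
    + intros x [z [Q [Hz [HQ [Hlb _]]]]]. apply Rle_trans with (Jobj n P Lth z Q lo).
      apply Hlb. exists lo; auto. apply J_le_queue; auto. apply Hlo.
  - split. exists zo, Qo. auto. intros x [z [Q [Hz [HQ ->]]]]. apply Hwd; auto.
  - intros zs Qs Hzs HQs Hmax ls.
    assert (HFs : Fobj n P Lth zs Qs = D).
    { apply Rle_antisym. apply Hwd; auto. rewrite <- HFo. apply Hmax; auto. }
    assert (Hlols : forall i, (i < n)%nat -> lo i = ls i) by (apply Huniq; auto).
    assert (Hfls : feasible n P Lth ls) by (apply (feasible_ext n P Lth lo); auto).
    split; [auto|split].
    + replace D with (queueObj n P Lth ls). apply inner_lub; auto.
      symmetry; apply queue_ext; auto.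
    + intros l Hl Hs i Hi. apply Huniq; auto. symmetry. apply (Hqsup l D Hl Hs).
Qed.
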